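(* Let $G$ be a finite simple undirected graph and let $F$ be a rooted forest on vertex set $V(G)$, given by parent pointers, all of whose edges are edges of $G$. Let $u$ be the root of one tree of $F$. Run the following procedure. Initialize a set $S=\{u\}$ and a FIFO queue $Q$ containing only $u$. While $Q$ is nonempty: pop a vertex $x$ from $Q$, and for each neighbor $y$ of $x$ in $G$: if $y=\mathrm{parent}(x)$, skip $y$; else if $\mathrm{parent}(y)=x$, push $y$ onto $Q$ and add $y$ to $S$; otherwise set $\mathit{succ}=\mathrm{true}$ and scan the vertices $w=y,\ \mathrm{parent}(y),\ \mathrm{parent}(\mathrm{parent}(y)),\dots$ up to and including the root of the tree of $F$ containing $y$, where for each scanned $w$: if $w\in S$, set $\mathit{succ}=\mathrm{false}$ and stop the scan, else add $w$ to $S$; if after the scan $\mathit{succ}=\mathrm{true}$, the whole procedure stops and reports success (the edge $(x,y)$ being a replacement edge). If the queue becomes empty without success being reported, the procedure terminates reporting failure. Then, if the procedure terminates reporting failure, $S$ is exactly the set of vertices of the tree of $F$ rooted at $u$.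
   Context: In the paper this procedure is the search for a replacement edge after a tree edge has been deleted from a spanning forest maintained by parent pointers; $u$ is the root of the subtree in which the search is performed. *)

(* Defs.v *)
From mathcomp Require Import all_boot.
Set Implicit Arguments. Unset Strict Implicit. Unset Printing Implicit Defensive.

(* Graph: vertex type T : finType, adjacency e : rel T.
   Forest: parent pointers  parent : T -> option T  (None = root).
   The order in which neighbours are visited is an arbitrary adjacency list
   nbrs : T -> seq T (uniq, with the same elements as the neighbourhood). *)

Section Procedure.
Variables (T : finType) (parent : T -> option T) (nbrs : T -> seq T).

Definition anc (k : nat) (v : T) : option T := iter k (obind parent) (Some v).

(* The scan w = y, parent y, ... up to the root.  Returns (succ, new S).
   Fuel #|T| suffices: each scanned vertex is added to S or stops the scan. *)
Fixpoint scan (fuel : nat) (S : {set T}) (w : T) : bool * {set T} :=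
  match fuel with
  | 0 => (true, S)
  | f.+1 =>
      if w \in S then (false, S)
      else let S' := w |: S in
           match parent w with
           | None => (true, S')
           | Some p => scan f S' p
           end
  end.

(* Processing the neighbours ys of the popped vertex x.
   None = success reported; Some (S, Q) = continue with state (S, Q). *)
Fixpoint process (x : T) (ys : seq T) (S : {set T}) (Q : seq T)
  : option ({set T} * seq T) :=
  match ys with
  | [::] => Some (S, Q)
  | y :: ys' =>
      if parent x == Some y then process x ys' S Q
      else if parent y == Some x then process x ys' (y |: S) (rcons Q y)
      else let (succ, S') := scan #|T| S y in
           if succ then None else process x ys' S' Q
  end.

Inductive outcome := Success | Failure of {set T}.

(* Main loop with fuel; None = not terminated within the given fuel. *)
Fixpoint run (fuel : nat) (S : {set T}) (Q : seq T) : option outcome :=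
  match fuel with
  | 0 => None
  | f.+1 =>
      match Q with
      | [::] => Some (Failure S)
      | x :: Q' =>
          match process x (nbrs x) S Q' with
          | None => Some Success
          | Some (S', Q'') => run f S' Q''
          end
      end
  end.

Definition search (u : T) (fuel : nat) : option outcome := run fuel [set u] [:: u].

End Procedure.

(* Main.v *)
Require Import Defs.
From mathcomp Require Import all_boot.

Theorem lemma7 (T : finType) (e : rel T) (parent : T -> option T)
    (nbrs : T -> seq T) (u : T)
    (e_sym : symmetric e) (e_irr : irreflexive e)
    (nbrs_uniq : forall x, uniq (nbrs x))
    (nbrs_mem : forall x y, (y \in nbrs x) = e x y)
    (parent_edge : forall v p, parent v = Some p -> e v p)
    (forest : forall v, exists k, anc parent k v = None)
    (u_root : parent u = None) :
  forall (fuel : nat) (S : {set T}),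
    search parent nbrs u fuel = Some (Failure S) ->
    forall v, v \in S <-> exists k, anc parent k v = Some u.
Proof.
have ancD : forall a b w, anc parent (a + b) w = iter a (obind parent) (anc parent b w).
  by move=> a b w; rewrite /anc iterD.
have ancS : forall k w, anc parent k.+1 w = obind parent (anc parent k w).
  by [].
have ancSr : forall k w, anc parent k.+1 w = obind (anc parent k) (parent w).
  move=> k w; rewrite -addn1 ancD /=; case: (parent w) => //= .
  by elim: k => //= k ->.
have iterNone : forall i, iter i (obind parent) None = None.
  by elim=> //= i ->.
have acyc : forall k w, anc parent k.+1 w = Some w -> False.
  move=> k w H.
  have Hn : forall n, anc parent (n * k.+1) w = Some w.
    elim=> [|n IH] //; by rewrite mulSn ancD IH.
  have [m Hm] := forest w.
  have := Hn m.
  have -> : m * k.+1 = (m * k.+1 - m) + m by rewrite subnK // leq_pmulr.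
  by rewrite ancD Hm iterNone.
pose D v := exists k, anc parent k v = Some u.
have Dtrans : forall v z j, anc parent j v = Some z -> D z -> D v.
  move=> v z j Hj [k Hk]; exists (k + j); by rewrite ancD Hj.
have Dchild : forall y x, parent y = Some x -> D x -> D y.
  move=> y x Hy Hx; apply: (Dtrans y x 1) => //; by rewrite /anc /= Hy.
have scanL : forall f S w S', scan parent f S w = (false, S') ->
   S \subset S' /\ exists z k, [/\ z \in S, anc parent k w = Some z &
     forall v, v \in S' -> v \in S \/ exists j, anc parent j v = Some z].
  elim=> [|f IH] S w S' //=.
  case: ifP => wS.
    case=> <-; split => //; exists w, 0; split => //; by left.
  case Hp: (parent w) => [p|] //.
  move/IH => [sub [z [k [zS Hk Hv]]]].
  split; first exact: subset_trans (subsetUr _ _) sub.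
  move: zS; rewrite in_setU1 => /orP [/eqP zw|zS].
    subst z; exfalso; apply: (acyc k w); by rewrite ancSr Hp.
  exists z, k.+1; split => //; first by rewrite ancSr Hp.
  move=> v /Hv [|]; last by right.
  rewrite in_setU1 => /orP [/eqP ->|]; last by left.
  by right; exists k.+1; rewrite ancSr Hp.
have procL : forall x ys S Q S' Q', process parent x ys S Q = Some (S', Q') ->
   D x -> (forall v, v \in S -> D v) ->
   [/\ S \subset S', (forall v, v \in S' -> D v), (forall q, q \in Q -> q \in Q'),
       (forall q, q \in Q' -> q \in Q \/ q \in S') &
       (forall y, y \in ys -> parent y = Some x -> y \in Q')].
  move=> x; elim=> [|y ys IH] S Q S' Q' /=.
    case=> <- <- Dx SD; split; [exact: subxx|exact: SD|by move=> q|by move=> q; left|by move=> y0].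
  case: ifP => [/eqP Hxy|_].
    move=> /IH H Dx SD; have [h1 h2 h3 h4 h5] := H Dx SD; split => //.
    move=> y0; rewrite in_cons => /orP [/eqP ->|]; last exact: h5.
    move=> Hyx; exfalso; apply: (acyc 1 x); by rewrite ancSr Hxy /anc /= Hyx.
  case: ifP => [/eqP Hyx|Hyx].
    move=> /IH H Dx SD.
    have Dy := Dchild y x Hyx Dx.
    have SD' : forall v, v \in y |: S -> D v.
      by move=> v; rewrite in_setU1 => /orP [/eqP ->|/SD].
    have [h1 h2 h3 h4 h5] := H Dx SD'; split => //.
    - exact: subset_trans (subsetUr _ _) h1.
    - by move=> q qQ; apply: h3; rewrite mem_rcons in_cons qQ orbT.
    - move=> q /h4 [|]; last by right.
      rewrite mem_rcons in_cons => /orP [/eqP ->|]; last by left.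
      by right; apply: (subsetP h1); rewrite in_setU1 eqxx.
    - move=> y0; rewrite in_cons => /orP [/eqP ->|]; last exact: h5.
      by move=> _; apply: h3; rewrite mem_rcons in_cons eqxx.
  case Hs: (scan parent #|T| S y) => [[] S1] //.
  move=> /IH H Dx SD.
  have [sub [z [k [zS Hk Hv]]]] := scanL _ _ _ _ Hs.
  have SD1 : forall v, v \in S1 -> D v.
    move=> v /Hv [/SD //|[j Hj]]; exact: Dtrans v z j Hj (SD z zS).
  have [h1 h2 h3 h4 h5] := H Dx SD1; split => //.
  - exact: subset_trans sub h1.
  - move=> y0; rewrite in_cons => /orP [/eqP ->|]; last exact: h5.
    by move=> Hy; rewrite Hy eqxx in Hyx.
have runL : forall fuel S Q Sf, run parent nbrs fuel S Q = Some (Failure Sf) ->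
   (forall v, v \in S -> D v) -> (forall q, q \in Q -> q \in S) ->
   (forall v, D v -> v \in S \/ exists k a, anc parent k v = Some a /\ a \in Q) ->
   (forall v, v \in Sf -> D v) /\ (forall v, D v -> v \in Sf).
  elim=> [|f IH] S Q Sf //=.
  case: Q => [|x Q0].
    case=> <- SD _ Hcomp; split => // v /Hcomp [//|[k [a [_]]]].
    by rewrite in_nil.
  case Hp: (process parent x (nbrs x) S Q0) => [[S' Q']|] //.
  move=> Hrun SD QS Hcomp.
  have xS : x \in S by apply: QS; rewrite in_cons eqxx.
  have Dx := SD x xS.
  have [h1 h2 h3 h4 h5] := procL _ _ _ _ _ _ Hp Dx SD.
  apply: (IH S' Q') => //.
  - move=> q /h4 [qQ|//]; apply: (subsetP h1); apply: QS; by rewrite in_cons qQ orbT.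
  - move=> v /Hcomp [vS|[k [a [Hk]]]]; first by left; exact: (subsetP h1).
    rewrite in_cons => /orP [/eqP ax|aQ]; last by right; exists k, a; split => //; apply: h3.
    subst a.
    case: k Hk => [|j].
      by rewrite /anc /= => [[->]]; left; exact: (subsetP h1).
    rewrite ancS; case Hc: (anc parent j v) => [c|] //= Hcx.
    right; exists j, c; split => //; apply: h5 => //.
    by rewrite nbrs_mem e_sym; apply: parent_edge.
move=> fuel S Hs.
have I1 : forall v, v \in [set u] -> D v.
  by move=> v; rewrite in_set1 => /eqP ->; exists 0.
have I2 : forall q, q \in [:: u] -> q \in [set u].
  by move=> q; rewrite in_cons in_nil orbF => /eqP ->; rewrite in_set1.
have I3 : forall v, D v -> v \in [set u] \/ exists k a, anc parent k v = Some a /\ a \in [:: u].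
  by move=> v [k Hk]; right; exists k, u; rewrite in_cons eqxx.
have [H1 H2] := runL _ _ _ _ Hs I1 I2 I3.
by move=> v; split; [exact: H1 | exact: H2].
Qed.
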